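(* Let $\epsilon>0$ and $t_n=n(\log n)^{3/4}$. Then $$\lambda\left(\sum_{i=1}^n a_i\,\mathbb 1_{\{t_n\le a_i\le \epsilon n\log n\}}\ge 3\epsilon\, n\log n\ \text{for infinitely many } n\right)=0.$$
   Context: Let $\lambda$ be Lebesgue measure on $[0,1)$, $\tau(x)=2x\bmod1$, $\chi(x)=\lfloor1/x\rfloor$ (with $\chi(0)=\infty$), $a_n=\chi\circ\tau^{n-1}$. Logarithms are natural. *)

(* Defs.v *)
From Stdlib Require Import Reals ZArith.
Open Scope R_scope.

Definition tau (x : R) : R := frac_part (2 * x).

(* chi(x) = floor(1/x), with chi(0) = infinity (encoded as None). *)
Definition chi (x : R) : option nat :=
  if Req_EM_T x 0 then None else Some (Z.to_nat (Int_part (1 / x))).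

Definition a (n : nat) (x : R) : option nat := chi (Nat.iter (n - 1) tau x).

Definition t_seq (n : nat) : R := INR n * Rpower (ln (INR n)) (3 / 4).

(* a_i * 1_{lo <= a_i <= hi}; an infinite digit contributes 0 (it never lies
   in the finite window). *)
Definition trunc_term (lo hi : R) (d : option nat) : R :=
  match d with
  | None => 0
  | Some k => if Rle_dec lo (INR k) then
                if Rle_dec (INR k) hi then INR k else 0
              else 0
  end.

Definition Strunc (eps : R) (n : nat) (x : R) : R :=
  match n with
  | O => 0
  | S m => sum_f_R0 (fun j => trunc_term (t_seq n) (eps * INR n * ln (INR n))
                                  (a (j + 1) x)) m
  end.

Definition lebesgue_null (A : R -> Prop) : Prop :=
  forall delta : R, 0 < delta ->
  exists lo hi : nat -> R,
    (forall k, lo k <= hi k) /\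
    (forall x, A x -> exists k, lo k < x < hi k) /\
    (forall m, sum_f_R0 (fun k => hi k - lo k) m <= delta).

(* Main.v *)
Require Import Defs.
From Stdlib Require Import Reals Lra Lia ZArith List Classical Psatz.
Open Scope R_scope.

Lemma frac_id z : 0 <= z < 1 -> frac_part z = z.
Proof.
  intros H. destruct (Int_part_frac_part_spec z 0 z H) as [_ H2]; [simpl; ring|].
  symmetry; exact H2.
Qed.

Lemma frac2 z : frac_part (2 * frac_part z) = frac_part (2 * z).
Proof.
  pose proof (base_fp (2 * frac_part z)) as [H1 H2].
  destruct (Int_part_frac_part_spec (2*z) (2 * Int_part z + Int_part (2 * frac_part z))%Z
     (frac_part (2 * frac_part z))) as [_ E]; [split; lra| |].
  - rewrite plus_IZR, mult_IZR.
    pose proof (Rplus_Int_part_frac_part z) as E1.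
    pose proof (Rplus_Int_part_frac_part (2 * frac_part z)) as E2.
    simpl (IZR 2). lra.
  - exact E.
Qed.

Lemma tau_range z : 0 <= tau z < 1.
Proof. unfold tau; pose proof (base_fp (2 * z)); lra. Qed.

Lemma Y_range x j : 0 <= x < 1 -> 0 <= Nat.iter j tau x < 1.
Proof.
  intros H; destruct j; [exact H|].
  change (Nat.iter (S j) tau x) with (tau (Nat.iter j tau x)).
  apply tau_range.
Qed.

Lemma iter_frac y r : 0 <= y < 1 -> Nat.iter r tau y = frac_part (2 ^ r * y).
Proof.
  intros H; induction r.
  - simpl. rewrite Rmult_1_l, frac_id; auto.
  - simpl Nat.iter. rewrite IHr. unfold tau. rewrite frac2. f_equal. simpl; ring.
Qed.

Lemma iter_small y r : 0 <= y -> 2 ^ r * y < 1 -> Nat.iter r tau y = 2 ^ r * y.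
Proof.
  intros H0; induction r; intros H.
  - simpl; ring.
  - simpl Nat.iter. rewrite IHr.
    + unfold tau. rewrite frac_id; [simpl; ring|].
      split; [apply Rmult_le_pos; [lra| apply Rmult_le_pos; [apply pow_le; lra|lra]]|].
      simpl in H; lra.
    + simpl in H. assert (0 <= 2 ^ r * y) by (apply Rmult_le_pos; [apply pow_le; lra|lra]). lra.
Qed.

Definition cnt (T M y : R) := exists d, chi y = Some d /\ T <= INR d <= M.

Lemma chi_some y d : 0 <= y -> chi y = Some d ->
  0 < y /\ INR d <= / y /\ / y < INR d + 1.
Proof.
  unfold chi; intros Hy. destruct (Req_EM_T y 0); [discriminate|].
  intros E; injection E as <-.
  assert (Hp : 0 < y) by lra. split; [exact Hp|].
  pose proof (base_Int_part (1 / y)) as [B1 B2].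
  assert (0 < / y) by (apply Rinv_0_lt_compat; lra).
  assert (I0 : (0 <= Int_part (1 / y))%Z).
  { apply le_IZR. assert (IZR (Int_part (1/y)) > -1) by (unfold Rdiv in *; lra).
    destruct (Z_lt_le_dec (Int_part (1/y)) 0) as [h|h]; [|apply IZR_le; exact h].
    apply Z.lt_le_pred in h. apply IZR_le in h. simpl in h. lra. }
  rewrite INR_IZR_INZ, Z2Nat.id by exact I0. unfold Rdiv in *. lra.
Qed.

Lemma trunc_cases T M y : 0 <= y ->
  (~ cnt T M y /\ trunc_term T M (chi y) = 0) \/
  (exists d, chi y = Some d /\ T <= INR d <= M /\ trunc_term T M (chi y) = INR d).
Proof.
  intros Hy. unfold trunc_term. destruct (chi y) as [d|] eqn:E.
  - destruct (Rle_dec T (INR d)); [destruct (Rle_dec (INR d) M)|].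
    + right; exists d; repeat split; auto.
    + left; split; auto. intros [d' [E' H']]. rewrite E in E'; injection E' as <-. lra.
    + left; split; auto. intros [d' [E' H']]. rewrite E in E'; injection E' as <-. lra.
  - left; split; auto. intros [d' [E' _]]; rewrite E in E'; discriminate.
Qed.

Lemma geom_sum (c : R) (i m : nat) : 0 <= c ->
  sum_f_R0 (fun j => if (j <? i)%nat then 0 else c * (/2) ^ (j - i)) m
   <= 2 * c - 2 * c * (/2) ^ (S m - i).
Proof.
  intros Hc. induction m.
  - simpl. destruct i; simpl.
    + replace (2 * c * (/ 2 * 1)) with c by field. lra.
    + lra.
  - rewrite tech5. cbv beta. destruct (S m <? i)%nat eqn:E.
    + apply Nat.ltb_lt in E. replace (S (S m) - i)%nat with 0%nat by lia.
      replace (S m - i)%nat with 0%nat in IHm by lia. lra.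
    + apply Nat.ltb_ge in E. replace (S (S m) - i)%nat with (S (S m - i)) by lia.
      rewrite <- tech_pow_Rmult. replace (2 * c * (/ 2 * (/ 2) ^ (S m - i))) with (c * (/ 2) ^ (S m - i)) by field. lra.
Qed.

Lemma min_exists (P : nat -> Prop) : (exists j, P j) ->
  exists j, P j /\ forall k, (k < j)%nat -> ~ P k.
Proof.
  intros [j Hj]. revert Hj. induction j as [j IH] using lt_wf_ind. intros Hj.
  destruct (classic (exists k, (k < j)%nat /\ P k)) as [[k [Hk Pk]]|N].
  - exact (IH k Hk Pk).
  - exists j; split; auto. intros k Hk Pk; apply N; eauto.
Qed.

Lemma dich x T M m : 0 <= x < 1 -> 0 < T -> 2 <= M ->
  sum_f_R0 (fun j => trunc_term T M (chi (Nat.iter j tau x))) m >= 3 * M ->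
  exists i j, (i < j <= m)%nat /\ Nat.iter i tau x <= / T /\
     Nat.iter j tau x <= / T /\ T <= 2 ^ (j - i).
Proof.
  intros Hx HT HM Hs. apply NNPP; intros Nop.
  set (Y := fun j => Nat.iter j tau x) in *.
  change (sum_f_R0 (fun j => trunc_term T M (chi (Y j))) m >= 3*M) in Hs.
  assert (HY : forall j, 0 <= Y j < 1) by (intros; apply Y_range; auto).
  destruct (classic (exists j, (j <= m)%nat /\ cnt T M (Y j))) as [Ex|Nex].
  2:{ assert (sum_f_R0 (fun j => trunc_term T M (chi (Y j))) m <= sum_f_R0 (fun _ => 0) m).
      { apply sum_Rle; intros j Hj. destruct (trunc_cases T M (Y j) (proj1 (HY j))) as [[_ E]|[d [E [Hd E2]]]];
        [ lra |]. exfalso; apply Nex; exists j; split; auto; exists d; auto. }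
      rewrite sum_cte in H. lra. }
  destruct (min_exists _ Ex) as [i0 [[Hi0 [d0 [E0 Hd0]]] Hmin]].
  destruct (chi_some _ _ (proj1 (HY i0)) E0) as [Yp [Yd1 Yd2]].
  assert (YT : forall j d, chi (Y j) = Some d -> T <= INR d -> Y j <= / T).
  { intros j d E Hd. destruct (chi_some _ _ (proj1 (HY j)) E) as [P1 [P2 _]].
    rewrite <- (Rinv_inv (Y j)). apply Rinv_le_contravar; [lra|lra]. }
  assert (Hle : sum_f_R0 (fun j => trunc_term T M (chi (Y j))) m <=
     sum_f_R0 (fun j => if (j <? i0)%nat then 0 else (/ Y i0) * (/2) ^ (j - i0)) m).
  { apply sum_Rle; intros j Hj.
    assert (0 <= / Y i0 * (/ 2) ^ (j - i0)).
    { apply Rmult_le_pos; [left; apply Rinv_0_lt_compat; lra| apply pow_le; lra]. }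
    destruct (trunc_cases T M (Y j) (proj1 (HY j))) as [[_ E]|[d [E [Hd E2]]]].
    - rewrite E. destruct (j <? i0)%nat; lra.
    - rewrite E2. destruct (j <? i0)%nat eqn:Lt.
      + apply Nat.ltb_lt in Lt. exfalso; elim (Hmin j Lt); split; [lia| exists d; auto].
      + apply Nat.ltb_ge in Lt. destruct (Nat.eq_dec j i0) as [->|Ne].
        * rewrite E in E0; injection E0 as ->. rewrite Nat.sub_diag; simpl. lra.
        * assert (Hlt : 2 ^ (j - i0) < T).
          { apply Rnot_le_lt; intros Hc. apply Nop. exists i0, j. repeat split; try lia.
            - apply (YT i0 d0); auto; lra.
            - apply (YT j d); auto; lra.
            - exact Hc. }
          assert (YT0 : Y i0 <= / T) by (apply (YT i0 d0); auto; lra).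
          assert (Yj : Y j = 2 ^ (j - i0) * Y i0).
          { unfold Y; cbv beta. transitivity (Nat.iter ((j - i0) + i0) tau x); [f_equal; lia|].
            rewrite Nat.iter_add. apply iter_small; [exact (proj1 (HY i0))|].
            apply Rle_lt_trans with (2 ^ (j - i0) * / T).
            - apply Rmult_le_compat_l; [apply pow_le; lra| exact YT0].
            - apply Rmult_lt_reg_r with T; [lra|]. rewrite Rmult_assoc, Rinv_l by lra. lra. }
          destruct (chi_some _ _ (proj1 (HY j)) E) as [_ [Hdj _]].
          rewrite Yj, Rinv_mult, <- pow_inv in Hdj. lra. }
  pose proof (geom_sum (/ Y i0) i0 m) as G.
  assert (0 <= / Y i0) by (left; apply Rinv_0_lt_compat; lra).
  specialize (G H).
  assert (0 <= 2 * / Y i0 * (/ 2) ^ (S m - i0)) by (apply Rmult_le_pos; [lra|apply pow_le; lra]).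
  fold Y in Hs. lra.
Qed.

Definition lsum (l : list (R * R)) : R := fold_right (fun iv s => (snd iv - fst iv) + s) 0 l.

Lemma lsum_app l1 l2 : lsum (l1 ++ l2) = lsum l1 + lsum l2.
Proof. induction l1; simpl; [ring| rewrite IHl1; ring]. Qed.

Lemma lsum_const l c : (forall iv, In iv l -> snd iv - fst iv = c) -> lsum l = INR (length l) * c.
Proof.
  induction l; intros H; [simpl; ring|].
  unfold lsum in *; cbn [fold_right length].
  rewrite IHl by (intros; apply H; right; auto). rewrite (H a) by (left; auto).
  rewrite S_INR. ring.
Qed.

Definition pairL (i j : nat) (a : R) : list (R * R) :=
  flat_map (fun q => map (fun r => (INR (q * 2 ^ (j - i) + r) / 2 ^ j,
                                   (INR (q * 2 ^ (j - i) + r) + a) / 2 ^ j))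
                      (seq 0 (S (Z.to_nat (Int_part (a * 2 ^ (j - i)))))))
           (seq 0 (2 ^ i)).

Lemma Int_nonneg z : 0 <= z -> (0 <= Int_part z)%Z.
Proof.
  intros H. pose proof (base_Int_part z) as [B1 B2].
  destruct (Z_lt_le_dec (Int_part z) 0) as [h|h]; [|exact h].
  apply Z.lt_le_pred in h. apply IZR_le in h. simpl in h. lra.
Qed.

Lemma INR_toZ z : 0 <= z -> INR (Z.to_nat (Int_part z)) = IZR (Int_part z).
Proof. intros H. rewrite INR_IZR_INZ, Z2Nat.id by (apply Int_nonneg; auto). reflexivity. Qed.

Lemma pair_len i j a : (i < j)%nat -> 0 <= a -> 1 <= a * 2 ^ (j - i) ->
  lsum (pairL i j a) <= 2 * a * a.
Proof.
  intros Hij Ha Hm. unfold pairL.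
  rewrite (lsum_const _ (a / 2 ^ j)).
  2:{ intros iv Hin. apply in_flat_map in Hin as [q [_ Hin]].
      apply in_map_iff in Hin as [r [<- _]]. simpl. field. apply pow_nonzero; lra. }
  rewrite (flat_map_constant_length (c := S (Z.to_nat (Int_part (a * 2 ^ (j - i)))))).
  2:{ intros q _. rewrite length_map, length_seq. reflexivity. }
  rewrite length_seq, mult_INR, pow_INR, (S_INR (Z.to_nat _)), INR_toZ by (apply Rmult_le_pos; [lra|apply pow_le; lra]).
  pose proof (base_Int_part (a * 2 ^ (j - i))) as [B1 _].
  assert (E : 2 ^ j = 2 ^ i * 2 ^ (j - i)) by (rewrite <- pow_add; f_equal; lia).
  replace (INR 2) with 2 by (simpl; ring).
  assert (P1 : 0 < 2 ^ i) by (apply pow_lt; lra).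
  assert (P2 : 0 < 2 ^ (j - i)) by (apply pow_lt; lra).
  rewrite E. unfold Rdiv.
  replace (2 ^ i * (IZR (Int_part (a * 2 ^ (j - i))) + 1) * (a * / (2 ^ i * 2 ^ (j - i))))
    with ((IZR (Int_part (a * 2 ^ (j - i))) + 1) * a * / 2 ^ (j - i)) by (field; lra).
  apply Rle_trans with (2 * (a * 2 ^ (j - i)) * a * / 2 ^ (j - i)).
  - apply Rmult_le_compat_r; [left; apply Rinv_0_lt_compat; lra|].
    apply Rmult_le_compat_r; lra.
  - right; field; lra.
Qed.

Lemma pair_cover x i j a : 0 <= x < 1 -> (i < j)%nat -> 0 <= a ->
  Nat.iter i tau x <= a -> Nat.iter j tau x <= a ->
  exists iv, In iv (pairL i j a) /\ fst iv <= x <= snd iv.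
Proof.
  intros Hx Hij Ha Hi Hj. rewrite iter_frac in Hi, Hj by exact Hx.
  set (m := (j - i)%nat).
  assert (Ej : j = (m + i)%nat) by (unfold m; lia).
  assert (X0 : 0 <= 2 ^ j * x) by (apply Rmult_le_pos; [apply pow_le|]; lra).
  set (p := Z.to_nat (Int_part (2 ^ j * x))).
  set (f := frac_part (2 ^ j * x)).
  assert (Ep : 2 ^ j * x = INR p + f).
  { unfold p, f. rewrite INR_toZ by exact X0. apply Rplus_Int_part_frac_part. }
  assert (Hf : 0 <= f < 1) by (unfold f; pose proof (base_fp (2 ^ j * x)); lra).
  assert (Pm : (0 < 2 ^ m)%nat) by (apply Nat.neq_0_lt_0, Nat.pow_nonzero; lia).
  set (q := (p / 2 ^ m)%nat). set (r := (p mod 2 ^ m)%nat).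
  assert (Epqr : p = (q * 2 ^ m + r)%nat) by (unfold q, r; rewrite Nat.mul_comm; apply Nat.div_mod; lia).
  assert (Hr : (r < 2 ^ m)%nat) by (unfold r; apply Nat.mod_upper_bound; lia).
  assert (Hr' : INR r + 1 <= 2 ^ m) by (rewrite <- S_INR, <- (pow_INR 2); replace (INR 2) with 2 by (simpl; ring) ; apply le_INR; lia).
  assert (Pm' : 0 < 2 ^ m) by (apply pow_lt; lra).
  assert (Pi' : 0 < 2 ^ i) by (apply pow_lt; lra).
  assert (E2 : 2 ^ j = 2 ^ m * 2 ^ i) by (rewrite Ej, pow_add; ring).
  assert (Ei : 2 ^ i * x = IZR (Z.of_nat q) + (INR r + f) / 2 ^ m).
  { rewrite <- INR_IZR_INZ. apply Rmult_eq_reg_l with (2 ^ m); [|lra].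
    rewrite <- Rmult_assoc, <- E2, Ep, Epqr, plus_INR, mult_INR, pow_INR. replace (INR 2) with 2 by (simpl; ring). field. lra. }
  assert (F0 : 0 <= (INR r + f) / 2 ^ m < 1).
  { split.
    - apply Rmult_le_pos; [pose proof (pos_INR r); lra| left; apply Rinv_0_lt_compat; lra].
    - apply Rmult_lt_reg_r with (2 ^ m); [lra|]. unfold Rdiv; rewrite Rmult_assoc, Rinv_l by lra. lra. }
  destruct (Int_part_frac_part_spec (2 ^ i * x) _ _ F0 Ei) as [_ Fi].
  rewrite <- Fi in Hi.
  assert (Hra : INR r <= a * 2 ^ m).
  { apply Rmult_le_reg_r with (/ 2 ^ m); [apply Rinv_0_lt_compat; lra|].
    rewrite Rmult_assoc, Rinv_r by lra. unfold Rdiv in Hi.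
    pose proof (Rmult_le_compat_r (/ 2 ^ m) f 0). 
    assert (0 <= f * / 2 ^ m) by (apply Rmult_le_pos; [lra|left; apply Rinv_0_lt_compat; lra]).
    rewrite Rmult_plus_distr_r in Hi. lra. }
  assert (Hrle : (r <= Z.to_nat (Int_part (a * 2 ^ m)))%nat).
  { pose proof (base_Int_part (a * 2 ^ m)) as [_ B2].
    assert (Z.of_nat r <= Int_part (a * 2 ^ m))%Z.
    { apply Z.lt_succ_r. apply lt_IZR. rewrite succ_IZR, <- INR_IZR_INZ. lra. }
    lia. }
  assert (Hq : (q < 2 ^ i)%nat).
  { unfold q. apply Nat.Div0.div_lt_upper_bound.
    assert (INR p < 2 ^ j).
    { assert (0 < 2 ^ j) by (apply pow_lt; lra).
      assert (2 ^ j * x < 2 ^ j * 1) by (apply Rmult_lt_compat_l; lra).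
      lra. }
    rewrite <- Nat.pow_add_r. replace (m + i)%nat with j by lia.
    apply INR_lt. rewrite pow_INR. replace (INR 2) with 2 by (simpl; ring). exact H. }
  exists (INR (q * 2 ^ (j - i) + r) / 2 ^ j, (INR (q * 2 ^ (j - i) + r) + a) / 2 ^ j).
  split.
  - apply in_flat_map. exists q. split; [apply in_seq; lia|].
    apply in_map_iff. exists r. split; [reflexivity| apply in_seq; fold m; lia].
  - fold m. rewrite <- Epqr. simpl fst; simpl snd.
    assert (P : 0 < 2 ^ j) by (apply pow_lt; lra).
    assert (f <= a).
    { unfold f. exact Hj. }
    split; apply Rmult_le_reg_l with (2 ^ j); try lra; unfold Rdiv;
      rewrite <- Rmult_assoc, Rinv_r_simpl_m by lra; lra.
Qed.

Definition Tp (k : nat) : R := 2 ^ k * Rpower (INR k / 2) (3 / 4).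
Definition hh (k : nat) : R := / sqrt (INR k / 2).

Lemma Rpower_pos y c : 0 < Rpower y c.
Proof. unfold Rpower; apply exp_pos. Qed.

Lemma Tp_pos k : 0 < Tp k.
Proof. unfold Tp; apply Rmult_lt_0_compat; [apply pow_lt; lra|apply Rpower_pos]. Qed.

Lemma ln_le' x y : 0 < x -> x <= y -> ln x <= ln y.
Proof. intros H [H1| ->]; [left; apply ln_increasing; auto| right; reflexivity]. Qed.

Lemma ln_pow2_ge k n : (1 <= k)%nat -> (2 ^ k <= n)%nat -> INR k / 2 <= ln (INR n).
Proof.
  intros Hk Hn.
  assert (H2 : 2 ^ k <= INR n).
  { replace (2 ^ k) with (INR (2 ^ k)) by (rewrite pow_INR; simpl; f_equal; ring). apply le_INR; exact Hn. }
  apply Rle_trans with (ln (2 ^ k)).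
  - rewrite ln_pow by lra. pose proof ln_lt_2. pose proof (pos_INR k).
    assert (INR k * (/ 2) <= INR k * ln 2) by (apply Rmult_le_compat_l; lra). lra.
  - apply ln_le'; [apply pow_lt; lra| exact H2].
Qed.

Lemma Tp_le k n : (1 <= k)%nat -> (2 ^ k <= n)%nat -> Tp k <= t_seq n.
Proof.
  intros Hk Hn. unfold Tp, t_seq.
  assert (H2 : 2 ^ k <= INR n).
  { replace (2 ^ k) with (INR (2 ^ k)) by (rewrite pow_INR; simpl; f_equal; ring). apply le_INR; exact Hn. }
  apply Rmult_le_compat; [apply pow_le; lra| left; apply Rpower_pos| exact H2|].
  apply Rle_Rpower_l; [lra|]. split.
  - assert (1 <= INR k) by (replace 1 with (INR 1) by reflexivity; apply le_INR; exact Hk). lra.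
  - apply ln_pow2_ge; auto.
Qed.

Lemma Rpower_sq y : 0 < y -> Rpower y (3/4) * Rpower y (3/4) = y * sqrt y.
Proof.
  intros Hy. rewrite <- Rpower_plus. replace (3/4 + 3/4) with (1 + / 2) by field.
  rewrite Rpower_plus, Rpower_1, Rpower_sqrt by exact Hy. reflexivity.
Qed.

Lemma ck_bound k : (2 <= k)%nat ->
  INR (2 ^ S k) * (INR (2 ^ S k) * (2 * / Tp k * / Tp k)) <= 32 * (hh (k - 1) - hh k).
Proof.
  intros Hk. rewrite pow_INR. replace (INR 2) with 2 by (simpl; ring).
  unfold Tp, hh.
  set (y := INR k / 2). set (y1 := INR (k - 1) / 2).
  assert (Ey : y = y1 + / 2).
  { unfold y, y1. rewrite minus_INR by lia. simpl (INR 1). field. }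
  assert (Hk' : 2 <= INR k) by (replace 2 with (INR 2) by (simpl; ring); apply le_INR; exact Hk).
  assert (Hy1 : 1 / 2 <= y1) by (unfold y in Ey; lra).
  assert (Hy : 0 < y) by lra.
  set (P := Rpower y (3/4)).
  assert (PP : P * P = y * sqrt y) by (apply Rpower_sq; exact Hy).
  assert (Pp : 0 < P) by apply Rpower_pos.
  set (A := sqrt y1). set (B := sqrt y).
  assert (HA : 0 < A) by (apply sqrt_lt_R0; lra).
  assert (HB : 0 < B) by (apply sqrt_lt_R0; lra).
  assert (AA : A * A = y1) by (apply sqrt_sqrt; lra).
  assert (BB : B * B = y) by (apply sqrt_sqrt; lra).
  assert (P2 : 0 < 2 ^ k) by (apply pow_lt; lra).
  replace (2 ^ S k * (2 ^ S k * (2 * / (2 ^ k * P) * / (2 ^ k * P)))) with (8 / (P * P))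
    by (simpl; field; lra).
  rewrite PP. fold B.
  assert (AB : A <= B) by (apply sqrt_le_1_alt; lra).
  assert (key : A <= 4 * (B * B) * (B - A)).
  { assert (E : (B - A) * (A + B) = 1 / 2) by nra.
    assert (4 * (B * B) * (B - A) * (A + B) >= A * (A + B)) by nra.
    nra. }
  rewrite <- BB at 1.
  apply Rmult_le_reg_r with (A * (B * B * B)); [apply Rmult_lt_0_compat; [lra|]; apply Rmult_lt_0_compat; nra|].
  replace (8 / (B * B * B) * (A * (B * B * B))) with (8 * A) by (field; lra).
  replace (32 * (/ A - / B) * (A * (B * B * B))) with (32 * (B * B) * (B - A)) by (field; lra).
  nra.
Qed.

Definition Fk (k : nat) : list (R * R) :=
  flat_map (fun i => flat_map (fun j =>
     if (i <? j)%nat then (if Rle_dec 1 (/ Tp k * 2 ^ (j - i)) then pairL i j (/ Tp k) else nil) else nil)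
     (seq 0 (2 ^ S k))) (seq 0 (2 ^ S k)).

Definition valid (l : list (R * R)) := forall iv, In iv l -> fst iv <= snd iv.

Lemma lsum_flat_le {A : Type} (f : A -> list (R * R)) l B :
  (forall e, In e l -> lsum (f e) <= B) -> lsum (flat_map f l) <= INR (length l) * B.
Proof.
  induction l; intros H; [simpl; unfold lsum; simpl; lra|].
  cbn [flat_map length]. rewrite lsum_app, S_INR.
  assert (lsum (f a) <= B) by (apply H; left; auto).
  assert (lsum (flat_map f l) <= INR (length l) * B) by (apply IHl; intros; apply H; right; auto).
  lra.
Qed.

Lemma Fk_len k : (2 <= k)%nat -> lsum (Fk k) <= 32 * (hh (k - 1) - hh k).
Proof.
  intros Hk. eapply Rle_trans; [|apply ck_bound; exact Hk].
  unfold Fk. eapply Rle_trans; [apply lsum_flat_le|].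
  - intros i _. apply lsum_flat_le. intros j _.
    instantiate (1 := 2 * / Tp k * / Tp k).
    pose proof (Tp_pos k).
    destruct (i <? j)%nat eqn:E; [destruct Rle_dec|].
    + apply Nat.ltb_lt in E. apply pair_len; auto. left; apply Rinv_0_lt_compat; lra.
    + unfold lsum; simpl. assert (0 < / Tp k) by (apply Rinv_0_lt_compat; lra). nra.
    + unfold lsum; simpl. assert (0 < / Tp k) by (apply Rinv_0_lt_compat; lra). nra.
  - rewrite length_seq. right; reflexivity.
Qed.

Lemma Fk_valid k : valid (Fk k).
Proof.
  intros iv Hin. unfold Fk in Hin.
  apply in_flat_map in Hin as [i [_ Hin]]. apply in_flat_map in Hin as [j [_ Hin]].
  destruct (i <? j)%nat; [destruct Rle_dec|]; try contradiction.
  unfold pairL in Hin. apply in_flat_map in Hin as [q [_ Hin]].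
  apply in_map_iff in Hin as [r0 [<- _]]. simpl.
  pose proof (Tp_pos k). assert (0 < / Tp k) by (apply Rinv_0_lt_compat; lra).
  assert (0 < 2 ^ j) by (apply pow_lt; lra).
  unfold Rdiv. apply Rmult_le_compat_r; [left; apply Rinv_0_lt_compat; lra| lra].
Qed.

Lemma Strunc_eq eps m x : Strunc eps (S m) x =
  sum_f_R0 (fun j => trunc_term (t_seq (S m)) (eps * INR (S m) * ln (INR (S m))) (chi (Nat.iter j tau x))) m.
Proof.
  unfold Strunc. apply sum_eq. intros j _. unfold a. f_equal. f_equal. f_equal. lia.
Qed.

Lemma Fk_cover eps k n x : 0 <= x < 1 -> (1 <= k)%nat -> (2 ^ k <= n < 2 ^ S k)%nat ->
  2 <= eps * INR n * ln (INR n) -> Strunc eps n x >= 3 * (eps * INR n * ln (INR n)) ->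
  exists iv, In iv (Fk k) /\ fst iv <= x <= snd iv.
Proof.
  intros Hx Hk [Hn1 Hn2] HM HS.
  destruct n as [|m]; [pose proof (Nat.pow_nonzero 2 k); lia|].
  rewrite Strunc_eq in HS.
  assert (Tn : Tp k <= t_seq (S m)) by (apply Tp_le; auto).
  pose proof (Tp_pos k) as Tk.
  destruct (dich x (t_seq (S m)) (eps * INR (S m) * ln (INR (S m))) m Hx ltac:(lra) HM HS)
    as [i [j [Hij [Hi [Hj Hp]]]]].
  assert (Ha : / t_seq (S m) <= / Tp k) by (apply Rinv_le_contravar; lra).
  assert (H1 : 1 <= / Tp k * 2 ^ (j - i)).
  { apply Rmult_le_reg_l with (Tp k); [lra|]. rewrite <- Rmult_assoc, Rinv_r, Rmult_1_l, Rmult_1_r by lra. lra. }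
  destruct (pair_cover x i j (/ Tp k) Hx ltac:(lia) ltac:(left; apply Rinv_0_lt_compat; lra)
     ltac:(lra) ltac:(lra)) as [iv [Hin Hiv]].
  exists iv. split; auto.
  unfold Fk. apply in_flat_map. exists i. split; [apply in_seq; lia|].
  apply in_flat_map. exists j. split; [apply in_seq; lia|].
  replace (i <? j)%nat with true by (symmetry; apply Nat.ltb_lt; lia).
  destruct Rle_dec; [exact Hin| contradiction].
Qed.

Definition lk (k0 k : nat) : list (R * R) := (0, 0) :: (if (k0 <=? k)%nat then Fk k else nil).
Fixpoint Lc (k0 K : nat) : list (R * R) :=
  match K with O => lk k0 0 | S K' => Lc k0 K' ++ lk k0 (S K') end.

Lemma Lc_len k0 K : (S K <= length (Lc k0 K))%nat.
Proof. induction K; simpl; [lia|]. rewrite length_app. simpl. lia. Qed.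

Lemma Lc_pre k0 K K' : (K <= K')%nat -> exists r, Lc k0 K' = Lc k0 K ++ r.
Proof.
  induction 1; [exists nil; rewrite app_nil_r; auto|].
  destruct IHle as [r E]. exists (r ++ lk k0 (S m)). simpl. rewrite E, app_assoc. auto.
Qed.

Lemma lk_valid k0 k : valid (lk k0 k).
Proof.
  intros iv [<-|H]; [simpl; lra|]. destruct (k0 <=? k)%nat; [apply (Fk_valid k); auto| contradiction].
Qed.

Lemma Lc_valid k0 K : valid (Lc k0 K).
Proof.
  induction K; simpl; [apply lk_valid|]. intros iv H. apply in_app_or in H as [H|H].
  - apply IHK; auto.
  - apply (lk_valid k0 (S K)); auto.
Qed.

Lemma Lc_in k0 k iv : In iv (lk k0 k) -> In iv (Lc k0 k).
Proof. destruct k; simpl; auto. intros; apply in_or_app; right; auto. Qed.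

Lemma lsum_nonneg l : valid l -> 0 <= lsum l.
Proof.
  induction l; intros H; unfold lsum; simpl; [lra|].
  assert (fst a <= snd a) by (apply H; left; auto).
  assert (0 <= lsum l) by (apply IHl; intros iv Hi; apply H; right; auto).
  unfold lsum in H1. lra.
Qed.

Lemma hh_nonneg k : 0 <= hh k.
Proof.
  unfold hh. destruct (Req_dec (sqrt (INR k / 2)) 0) as [E|E].
  - rewrite E, Rinv_0. lra.
  - left; apply Rinv_0_lt_compat. pose proof (sqrt_pos (INR k / 2)). lra.
Qed.

Lemma Lc_sum k0 K : (2 <= k0)%nat ->
  lsum (Lc k0 K) <= if (k0 <=? K)%nat then 32 * (hh (k0 - 1) - hh K) else 0.
Proof.
  intros Hk0. induction K.
  - simpl. replace (k0 <=? 0)%nat with false by (symmetry; apply Nat.leb_gt; lia).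
    unfold lk. replace (k0 <=? 0)%nat with false by (symmetry; apply Nat.leb_gt; lia).
    unfold lsum; simpl; lra.
  - simpl Lc. rewrite lsum_app. unfold lk.
    assert (Hs : lsum ((0, 0) :: (if (k0 <=? S K)%nat then Fk (S K) else nil)) =
       lsum (if (k0 <=? S K)%nat then Fk (S K) else nil)) by (unfold lsum; simpl; ring).
    rewrite Hs.
    destruct (k0 <=? S K)%nat eqn:E1.
    + apply Nat.leb_le in E1. pose proof (Fk_len (S K) ltac:(lia)) as F.
      replace (S K - 1)%nat with K in F by lia.
      destruct (k0 <=? K)%nat eqn:E2.
      * lra.
      * apply Nat.leb_gt in E2. replace (k0 - 1)%nat with K by lia. lra.
    + apply Nat.leb_gt in E1. replace (k0 <=? K)%nat with false in IHK by (symmetry; apply Nat.leb_gt; lia).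
      unfold lsum at 2; simpl. lra.
Qed.

Lemma Lc_sum' k0 K : (2 <= k0)%nat -> lsum (Lc k0 K) <= 32 * hh (k0 - 1).
Proof.
  intros H. eapply Rle_trans; [apply Lc_sum; auto|].
  pose proof (hh_nonneg K). pose proof (hh_nonneg (k0 - 1)).
  destruct (k0 <=? K)%nat; lra.
Qed.

Definition len (iv : R * R) := snd iv - fst iv.

Lemma nth_sum L M : valid L -> sum_f_R0 (fun m => len (nth m L (0, 0))) M <= lsum L.
Proof.
  revert M. induction L; intros M H.
  - assert (sum_f_R0 (fun m => len (nth m nil (0, 0))) M <= sum_f_R0 (fun _ => 0) M).
    { apply sum_Rle; intros m _. destruct m; unfold len; simpl; lra. }
    rewrite sum_cte in H0. change (lsum nil) with 0. lra.
  - assert (Hv : valid L) by (intros iv Hi; apply H; right; auto).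
    assert (0 <= lsum L) by (apply lsum_nonneg; auto).
    destruct M.
    + simpl. unfold len, lsum; simpl. fold (lsum L). lra.
    + rewrite decomp_sum by lia. simpl pred. cbn [nth].
      specialize (IHL M Hv). unfold lsum; simpl. fold (lsum L). unfold len at 1. simpl nth. lra.
Qed.

Lemma nth_stable k0 m K : (m <= K)%nat -> nth m (Lc k0 K) (0, 0) = nth m (Lc k0 m) (0, 0).
Proof.
  intros H. destruct (Lc_pre k0 m K H) as [r E]. rewrite E. apply app_nth1.
  pose proof (Lc_len k0 m). lia.
Qed.

Theorem mainTheorem6 (eps : R) (heps : 0 < eps) :
  lebesgue_null (fun x => 0 <= x < 1 /\
    forall N : nat, exists n : nat, (N <= n)%nat /\
      Strunc eps n x >= 3 * eps * INR n * ln (INR n)).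
Proof.
  intros delta Hd.
  destruct (INR_unbounded (Rmax 3 (Rmax (2 / eps) (2 * ((64 / delta) * (64 / delta)))))) as [K HK].
  pose proof (Rmax_l 3 (Rmax (2 / eps) (2 * ((64 / delta) * (64 / delta))))).
  pose proof (Rmax_r 3 (Rmax (2 / eps) (2 * ((64 / delta) * (64 / delta))))).
  pose proof (Rmax_l (2 / eps) (2 * ((64 / delta) * (64 / delta)))).
  pose proof (Rmax_r (2 / eps) (2 * ((64 / delta) * (64 / delta)))).
  set (k0 := (K + 2)%nat).
  assert (Hh : 32 * hh (k0 - 1) <= delta / 2).
  { unfold hh. replace (k0 - 1)%nat with (S K) by (unfold k0; lia). rewrite S_INR.
    assert (Hs : 64 / delta <= sqrt ((INR K + 1) / 2)).
    { rewrite <- (sqrt_Rsqr (64 / delta)) by (unfold Rdiv; apply Rmult_le_pos; [lra| left; apply Rinv_0_lt_compat; lra]).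
      apply sqrt_le_1_alt. unfold Rsqr. lra. }
    assert (0 < 64 / delta) by (unfold Rdiv; apply Rmult_lt_0_compat; [lra| apply Rinv_0_lt_compat; lra]).
    assert (/ sqrt ((INR K + 1) / 2) <= / (64 / delta)) by (apply Rinv_le_contravar; lra).
    replace (/ (64 / delta)) with (delta / 64) in H4 by (field; lra). lra. }
  set (w := fun m : nat => delta / 8 * (/ 2) ^ m).
  assert (Hw : forall m, 0 < w m) by (intros; unfold w; apply Rmult_lt_0_compat; [lra| apply pow_lt; lra]).
  set (I := fun m => nth m (Lc k0 m) (0, 0)).
  exists (fun m => fst (I m) - w m), (fun m => snd (I m) + w m).
  assert (IV : forall m, fst (I m) <= snd (I m)).
  { intros m. apply (Lc_valid k0 m). apply nth_In. pose proof (Lc_len k0 m). lia. }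
  split; [|split].
  - intros k. pose proof (IV k); pose proof (Hw k); lra.
  - intros x [Hx HA].
    destruct (HA (2 ^ k0)%nat) as [n [Hn HS]].
    assert (Hn0 : (0 < n)%nat) by (pose proof (Nat.pow_nonzero 2 k0); lia).
    set (k := Nat.log2 n).
    pose proof (Nat.log2_spec n Hn0) as Hsp. fold k in Hsp.
    assert (Hk : (k0 <= k)%nat) by (apply Nat.log2_le_pow2; auto).
    assert (Hk0n : (K < n)%nat).
    { pose proof (Nat.pow_gt_lin_r 2 k0 ltac:(lia)). unfold k0 in *. lia. }
    assert (HKn : INR K <= INR n) by (apply le_INR; lia).
    assert (Hln : 1 <= ln (INR n)).
    { rewrite <- (ln_exp 1). apply ln_le'; [apply exp_pos|]. pose proof exp_le_3. lra. }
    assert (HM : 2 <= eps * INR n * ln (INR n)).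
    { assert (2 <= eps * INR n).
      { assert (Q : 2 / eps <= INR n) by lra.
        apply Rmult_le_compat_l with (r := eps) in Q; [|lra].
        replace (eps * (2 / eps)) with 2 in Q by (field; lra). lra. }
      assert (eps * INR n * 1 <= eps * INR n * ln (INR n)) by (apply Rmult_le_compat_l; lra).
      lra. }
    destruct (Fk_cover eps k n x Hx ltac:(unfold k0 in *; lia) Hsp HM ltac:(lra)) as [iv [Hin Hiv]].
    assert (Hin2 : In iv (Lc k0 k)).
    { apply Lc_in. unfold lk. right. replace (k0 <=? k)%nat with true by (symmetry; apply Nat.leb_le; lia). exact Hin. }
    destruct (In_nth _ _ (0, 0) Hin2) as [m [Hm Em]].
    assert (EI : I m = iv).
    { unfold I. rewrite <- Em. destruct (Nat.le_gt_cases m k) as [L|L].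
      - symmetry; apply nth_stable; auto.
      - destruct (Lc_pre k0 k m ltac:(lia)) as [r E]. rewrite E. apply app_nth1; auto. }
    exists m. rewrite EI. pose proof (Hw m). lra.
  - intros M.
    assert (Hle : sum_f_R0 (fun k => snd (I k) + w k - (fst (I k) - w k)) M <=
       sum_f_R0 (fun k => len (nth k (Lc k0 M) (0, 0)) + 2 * w k) M).
    { apply sum_Rle. intros k Hk. unfold I. rewrite (nth_stable k0 k M Hk). unfold len. lra. }
    rewrite plus_sum in Hle.
    pose proof (nth_sum (Lc k0 M) M (Lc_valid k0 M)).
    pose proof (Lc_sum' k0 M ltac:(unfold k0; lia)).
    assert (G : sum_f_R0 (fun k => 2 * w k) M <= delta / 2).
    { unfold w. replace (sum_f_R0 (fun k => 2 * (delta / 8 * (/ 2) ^ k)) M)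
        with (delta / 4 * sum_f_R0 (fun k => (/ 2) ^ k) M).
      2:{ rewrite scal_sum. apply sum_eq. intros; field. }
      rewrite tech3 by lra.
      assert (0 < (/ 2) ^ S M) by (apply pow_lt; lra).
      replace ((1 - (/ 2) ^ S M) / (1 - / 2)) with (2 - 2 * (/ 2) ^ S M) by field.
      assert (0 <= delta / 4 * (2 * (/ 2) ^ S M)) by (apply Rmult_le_pos; lra).
      lra. }
    lra.
Qed.
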